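(* Under the standing assumptions below, if $\delta:\mathbb{S}^m\to\mathbb{R}^n$ is continuous with $\Gamma_0[\delta]=0$, then $\delta(\phi)\in\operatorname{span}\{\partial_t\gamma(\phi,0),\partial_{\phi_1}\gamma(\phi,0),\dots,\partial_{\phi_m}\gamma(\phi,0)\}$ for every $\phi\in\mathbb{S}^m$, i.e. the right nullspace of $\Gamma_0$ consists of functions tangent to the torus $(\phi,t)\mapsto\gamma(\phi,t)$ at $t=0$.
   Context: Let $\mathbb{S}=\mathbb{R}/\mathbb{Z}$, $m\ge 1$, $n\ge1$, $f:\mathbb{R}^n\to\mathbb{R}^n$ smooth, $T>0$. Let $u:\mathbb{S}^{m+1}\to\mathbb{R}^n$ be smooth and $\rho\in\mathbb{R}^m$ be such that $1,\rho_1,\dots,\rho_m$ are rationally independent, and let $\gamma(\phi,t):=u(\phi+\rho t,t)$ solve $\partial_t\gamma=Tf(\gamma)$ for every $\phi\in\mathbb{S}^m$. Let $X(\phi,t)$ solve $\partial_tX=T\,\mathrm{D}f(\gamma(\phi,t))X$, $X(\phi,0)=I_n$. Define $\Gamma_0[\delta](\phi):=X(\phi-\rho,1)\delta(\phi-\rho)-\delta(\phi)$ for continuous $\delta:\mathbb{S}^m\to\mathbb{R}^n$. Normal hyperbolicity assumption: there are continuous $w_t,w_{\phi_1},\dots,w_{\phi_m}:\mathbb{S}^m\to\mathbb{R}^n$ such that $$Q(\phi,t):=X(\phi,t)\Big(I_n-\partial_t\gamma(\phi,0)w_t^\mathsf{T}(\phi)-\sum_{i=1}^m\partial_{\phi_i}\gamma(\phi,0)w_{\phi_i}^\mathsf{T}(\phi)\Big)X^{-1}(\phi,t)$$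 is a smooth family of projections with $Q(\phi,t+1)=Q(\phi+\rho,t)$, and $\Gamma_0$ is a bijection with bounded inverse on the space of functions $\phi\mapsto Q(\phi,0)\delta(\phi)$. *)

(* Defs.v *)
From HB Require Import structures.
From mathcomp Require Import all_boot all_order all_algebra.
From mathcomp Require Import all_classical all_reals all_analysis.
Set Implicit Arguments. Unset Strict Implicit. Unset Printing Implicit Defensive.
Import Order.TTheory GRing.Theory Num.Theory.
Import numFieldNormedType.Exports.
Local Open Scope ring_scope.

Section Defs.
Context {R : realType}.

Definition iterD {a b : nat} {W : normedModType R} (vs : seq 'M[R]_(a, b))
  (g : 'M[R]_(a, b) -> W) : 'M[R]_(a, b) -> W :=
  foldr (fun v h => fun x => derive h x v) g vs.

(* C^infty on R^(a*b) (row or column vectors): all iterated directional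
   derivatives exist and are continuous *)
Definition smooth {a b : nat} {W : normedModType R} (g : 'M[R]_(a, b) -> W) : Prop :=
  forall vs : seq 'M[R]_(a, b),
    continuous (iterD vs g) /\ forall x v, derivable (iterD vs g) x v.

(* g is 1-periodic in every coordinate, i.e. g descends to the torus S^k = R^k/Z^k *)
Definition torus_periodic {k : nat} {W : Type} (g : 'rV[R]_k -> W) : Prop :=
  forall (x : 'rV[R]_k) (i : 'I_k), g (x + delta_mx 0 i) = g x.

Definition rat_indep1 {m : nat} (rho : 'rV[R]_m) : Prop :=
  forall (q0 : rat) (q : 'I_m -> rat),
    ratr q0 + \sum_(i < m) ratr (q i) * rho 0 i = 0 -> q0 = 0 /\ forall i, q i = 0.

Definition pt {m : nat} (phi : 'rV[R]_m) (t : R) : 'rV[R]_(m + 1) :=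
  row_mx phi (t%:M).

Definition gam {m n : nat} (u : 'rV[R]_(m + 1) -> 'cV[R]_n) (rho : 'rV[R]_m)
  (phi : 'rV[R]_m) (t : R) : 'cV[R]_n := u (pt (phi + t *: rho) t).

Definition jac {n : nat} (f : 'cV[R]_n -> 'cV[R]_n) (x : 'cV[R]_n) : 'M[R]_n :=
  \matrix_(i, j) (derive f x (delta_mx j 0 : 'cV[R]_n)) i 0.

Definition dt_gam {m n : nat} (g : 'rV[R]_m -> R -> 'cV[R]_n) (phi : 'rV[R]_m)
  : 'cV[R]_n := derive (g phi) 0 1.

Definition dphi_gam {m n : nat} (g : 'rV[R]_m -> R -> 'cV[R]_n) (phi : 'rV[R]_m)
  (i : 'I_m) : 'cV[R]_n := derive (fun psi => g psi 0) phi (delta_mx 0 i).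

Definition Qmat {m n : nat} (g : 'rV[R]_m -> R -> 'cV[R]_n)
  (X : 'rV[R]_m -> R -> 'M[R]_n) (wt : 'rV[R]_m -> 'cV[R]_n)
  (wphi : 'I_m -> 'rV[R]_m -> 'cV[R]_n) (phi : 'rV[R]_m) (t : R) : 'M[R]_n :=
  X phi t *m (1%:M - dt_gam g phi *m (wt phi)^T
                   - \sum_(i < m) dphi_gam g phi i *m (wphi i phi)^T)
      *m invmx (X phi t).

Definition Gamma0 {m n : nat} (X : 'rV[R]_m -> R -> 'M[R]_n) (rho : 'rV[R]_m)
  (delta : 'rV[R]_m -> 'cV[R]_n) : 'rV[R]_m -> 'cV[R]_n :=
  fun phi => X (phi - rho) 1 *m delta (phi - rho) - delta phi.

Definition C0torus {m n : nat} (delta : 'rV[R]_m -> 'cV[R]_n) : Prop :=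
  continuous delta /\ torus_periodic delta.

Definition Qspace {m n : nat} (Q : 'rV[R]_m -> R -> 'M[R]_n)
  (g : 'rV[R]_m -> 'cV[R]_n) : Prop :=
  exists delta, C0torus delta /\ g = (fun phi => Q phi 0 *m delta phi).

Definition bij_bounded_inv {m n : nat} (Q : 'rV[R]_m -> R -> 'M[R]_n)
  (G : ('rV[R]_m -> 'cV[R]_n) -> ('rV[R]_m -> 'cV[R]_n)) : Prop :=
  [/\ (forall g, Qspace Q g -> Qspace Q (G g)),
      (forall g1 g2, Qspace Q g1 -> Qspace Q g2 -> G g1 = G g2 -> g1 = g2),
      (forall h, Qspace Q h -> exists g, Qspace Q g /\ G g = h) &
      (exists C : R, forall g, Qspace Q g -> forall B : R,
          (forall phi, `|G g phi| <= B) -> forall phi, `|g phi| <= C * B)].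

End Defs.

(* Main.v *)
Require Import Defs.
From HB Require Import structures.
From mathcomp Require Import all_boot all_order all_algebra.
From mathcomp Require Import all_classical all_reals all_analysis.
From mathcomp Require Import lra ring.
Import Order.TTheory GRing.Theory Num.Theory.
Import numFieldNormedType.Exports.
Local Open Scope ring_scope.

Lemma is_derive_sumf (R : realType) k (F : 'I_k -> R -> R) (t : R) (dF : 'I_k -> R) :
  (forall i, is_derive t 1 (F i) (dF i)) ->
  is_derive t 1 (fun s => \sum_i F i s) (\sum_i dF i).
Proof.
move=> h; have -> : (fun s => \sum_i F i s) = \sum_i F i.
  by apply/funext=> s; rewrite fct_sumE.
exact: is_derive_sum.
Qed.

Lemma is_derive_mulf (R : realType) (F G : R -> R) (t dF dG : R) :
  is_derive t 1 F dF -> is_derive t 1 G dG ->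
  is_derive t 1 (fun s => F s * G s) (F t * dG + G t * dF).
Proof.
move=> hF hG; have -> : (fun s => F s * G s) = F * G by [].
exact: is_deriveM.
Qed.

Lemma is_derive_cstf (R : realType) (c t : R) : is_derive t 1 (fun _ : R => c) 0.
Proof. exact: is_derive_cst. Qed.
Section Ent.
Local Open Scope classical_set_scope.
Lemma is_derive_entry (R : realType) a b (g : R -> 'M[R]_(a,b)) (t : R) (dg : 'M[R]_(a,b)) i j :
  is_derive t 1 g dg -> is_derive t 1 (fun s => g s i j) (dg i j).
Proof.
move=> [hd hdv].
have hc : (fun h : R => h^-1 *: ((g \o shift t) (h *: 1) - g t)) @ 0^' --> dg.
  by rewrite -hdv; exact: hd.
have hc' : (fun h : R => h^-1 *: (((fun s => g s i j) \o shift t) (h *: 1) - g t i j)) @ 0^' --> dg i j.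
  have -> : (fun h : R => h^-1 *: (((fun s => g s i j) \o shift t) (h *: 1) - g t i j)) =
     (fun M : 'M[R]_(a,b) => M i j) \o (fun h : R => h^-1 *: ((g \o shift t) (h *: 1) - g t)).
    by apply/funext => h; rewrite /= !mxE.
  exact: (continuous_cvg _ (@coord_continuous R a b i j dg) hc).
split; first exact: (cvgP _ hc').
exact: cvg_lim hc'.
Qed.
End Ent.

Lemma quad_bound (R : realType) n (a : 'I_n -> 'I_n -> R) (x : 'I_n -> R) K :
  0 <= K -> (forall i l, `|a i l| <= K) ->
  - (K * n%:R * \sum_i x i * x i) <= \sum_i x i * \sum_l a i l * x l.
Proof.
move=> K0 ha.
have key : forall i l, - (x i * (a i l * x l)) <= K / 2 * (x i * x i + x l * x l).
  move=> i l.
  have h1 : - (x i * (a i l * x l)) <= K * (`|x i| * `|x l|).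
    apply: le_trans (ler_norm _) _; rewrite normrN !normrM mulrCA.
    by rewrite ler_wpM2r // mulr_ge0.
  rewrite -[leRHS]mulrA; apply: le_trans h1 _.
  rewrite ler_wpM2l //.
  have : 0 <= (`|x i| - `|x l|) ^+ 2 by apply: sqr_ge0.
  have e1 : `|x i| * `|x i| = x i * x i by rewrite -expr2 real_normK ?num_real // expr2.
  have e2 : `|x l| * `|x l| = x l * x l by rewrite -expr2 real_normK ?num_real // expr2.
  nra.
rewrite -lerN2 opprK -sumrN.
apply: (@le_trans _ _ (\sum_i \sum_l K / 2 * (x i * x i + x l * x l))).
  apply: ler_sum => i _; rewrite big_distrr -sumrN /=; apply: ler_sum => l _; exact: key.
under eq_bigr do rewrite -big_distrr /= big_split /= sumr_const card_ord.
rewrite -big_distrr /= big_split /= sumr_const card_ord.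
set S := \sum_i _.
idtac.
idtac.
rewrite /S -sumrMnl; set T := \sum_(i < n) x i * x i.
have eT : \sum_(i < n) (x i * x i *+ n) = T *+ n by rewrite sumrMnl.
rewrite !eT -[T *+ n]mulr_natr.
by rewrite -mulr2n mulr2n mulrDr -mulrDl -splitr [T * _]mulrC mulrA.
Qed.

Section ODE.
Variables (R : realType) (n : nat) (Y A : R -> 'M[R]_n).
Hypothesis hY : forall t : R, is_derive t 1 Y (A t *m Y t).
Variable w : 'cV[R]_n.
Definition xx i (t : R) := \sum_k Y t i k * w k 0.

Lemma dxx i (t : R) : is_derive t 1 (xx i) (\sum_l A t i l * xx l t).
Proof.
have h : is_derive t 1 (xx i) (\sum_k ((A t *m Y t) i k * w k 0)).
  apply: is_derive_sumf => k.
  have := @is_derive_mulf _ _ _ _ _ _ (@is_derive_entry _ _ _ _ _ _ i k (hY t)) (@is_derive_cstf _ (w k 0) t).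
  by rewrite mulr0 add0r mulrC.
rewrite (_ : \sum_l _ = \sum_k ((A t *m Y t) i k * w k 0)) //.
rewrite /xx; under [RHS]eq_bigr do rewrite mxE big_distrl /=.
rewrite [RHS]exchange_big /=; apply: eq_bigr => l _.
rewrite big_distrr; apply: eq_bigr => k _. by rewrite /= mulrA.
Qed.

Definition Dx i (t : R) := \sum_l A t i l * xx l t.
Definition ss (t : R) := \sum_i xx i t * xx i t.

Lemma dss (t : R) : is_derive t 1 ss (\sum_i (xx i t * Dx i t + xx i t * Dx i t)).
Proof. apply: is_derive_sumf => i; exact: (@is_derive_mulf _ _ _ _ _ _ (dxx i t) (dxx i t)). Qed.

Lemma xxE i (t : R) : xx i t = (Y t *m w) i 0.
Proof. by rewrite /xx mxE. Qed.

Lemma fund_kernel : (forall i j, continuous (fun t => A t i j)) ->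
  Y 0 = 1%:M -> Y 1 *m w = 0 -> w = 0.
Proof.
move=> cA Y0 Y1.
have hb : forall p : 'I_n * 'I_n, exists K : R,
    forall t, t \in `[0, 1]%R -> `|A t p.1 p.2| <= K.
  move=> p; have [|c _ hc] := @EVT_max R (fun t => `|A t p.1 p.2|) 0 1 ler01.
    apply: continuous_subspaceT => t.
    exact: (continuous_comp (cA p.1 p.2 t) (@norm_continuous _ _ _)).
  by exists `|A c p.1 p.2|.
have [Kf hK] := choice hb.
set K := \sum_p `|Kf p|.
have K0 : 0 <= K by apply: sumr_ge0.
have hA : forall t, t \in `[0, 1]%R -> forall i l, `|A t i l| <= K.
  move=> t ht i l; apply: le_trans (hK (i, l) t ht) _.
  apply: le_trans (ler_norm _) _; rewrite /K (bigD1 (i, l)) //=.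
  by rewrite lerDl sumr_ge0.
set L := K * n%:R * 2.
pose e (t : R) := expR (L * t).
have de : forall x : R, is_derive x 1 e (expR (L * x) * L).
  move=> x.
  have dL : is_derive x 1 (fun t : R => L * t) L.
    have H := is_deriveZ L (is_derive_id x 1).
    case: H => d v; split => //.
    by rewrite v /= [_%:A]mulr1.
  have d1 : derivable (fun t : R => L * t) x 1 by case: dL.
  have d2 : derivable expR (L * x) 1 by exact: derivable_expR.
  apply: DeriveDef.
    apply/derivable1_diffP.
    apply: (@differentiable_comp _ _ _ _ (fun t : R => L * t) expR).
      exact/derivable1_diffP.
    exact/derivable1_diffP.
  rewrite -derive1E (derive1_comp d1 d2) !derive1E.
  by rewrite (@derive_val _ _ _ _ _ _ _ (is_derive_expR (L * x))) (@derive_val _ _ _ _ _ _ _ dL).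
pose h (t : R) := ss t * e t.
have dh : forall x : R, is_derive x 1 h
    (ss x * (expR (L * x) * L) + e x * \sum_i (xx i x * Dx i x + xx i x * Dx i x)).
  move=> x; exact: (@is_derive_mulf _ _ _ _ _ _ (dss x) (de x)).
have hmono : h 0 <= h 1.
  apply: (@ger0_derive1_ndecr R h 0 1 _ _ _ 0 1 (lexx 0) ler01 (lexx 1)).
  - by move=> x _; by case: (dh x).
  - move=> x hx.
    have hx' : x \in `[0, 1]%R.
      by move: hx; rewrite !in_itv /= => /andP[/ltW -> /ltW ->].
    rewrite derive1E (@derive_val _ _ _ _ _ _ _ (dh x)).
    have Hq := @quad_bound _ _ (A x) (fun i => xx i x) K K0 (hA x hx').
    rewrite big_split /=.
    change (\sum_i xx i x * \sum_l A x i l * xx l x) with (\sum_i xx i x * Dx i x) in Hq.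
    change (\sum_i xx i x * xx i x) with (ss x) in Hq.
    set q := \sum_i xx i x * Dx i x in Hq *.
    have ep : 0 < e x by exact: expR_gt0.
    have -> : ss x * (expR (L * x) * L) + e x * (q + q) =
       e x * (2 * (K * n%:R * ss x) + (q + q)) by rewrite /L /e; ring.
    move: Hq.
    move=> Hq; apply: mulr_ge0; first exact: ltW.
    lra.
  - apply: derivable_within_continuous => x _; by case: (dh x).
have h1 : h 1 = 0.
  rewrite /h /ss big1 ?mul0r // => i _.
  by rewrite xxE Y1 mxE mul0r.
have h0 : h 0 = \sum_i w i 0 * w i 0.
  rewrite /h /e mulr0 expR0 mulr1 /ss; apply: eq_bigr => i _.
  by rewrite xxE Y0 mul1mx.
have hs : \sum_i w i 0 * w i 0 = 0.
  apply/eqP; rewrite eq_le; apply/andP; split.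
    by rewrite -h0 (le_trans hmono) // h1.
  by apply: sumr_ge0 => i _; by rewrite -expr2 sqr_ge0.
have hw : forall i, w i 0 * w i 0 = 0.
  move=> i; apply: (psumr_eq0P _ hs) => // k _; by rewrite -expr2 sqr_ge0.
apply/matrixP => i j; rewrite ord1 mxE.
by have /eqP := hw i; rewrite mulf_eq0 orbb => /eqP.
Qed.

End ODE.

Theorem mainTheorem13 (R : realType) (m n : nat) (hm : (1 <= m)%N) (hn : (1 <= n)%N)
  (f : 'cV[R]_n -> 'cV[R]_n) (T : R)
  (u : 'rV[R]_(m + 1) -> 'cV[R]_n) (rho : 'rV[R]_m)
  (X : 'rV[R]_m -> R -> 'M[R]_n)
  (wt : 'rV[R]_m -> 'cV[R]_n) (wphi : 'I_m -> 'rV[R]_m -> 'cV[R]_n)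
  (delta : 'rV[R]_m -> 'cV[R]_n) :
  smooth f -> 0 < T ->
  smooth u -> torus_periodic u ->
  rat_indep1 rho ->
  (forall phi t, is_derive t (1 : R) (gam u rho phi) (T *: f (gam u rho phi t))) ->
  (forall phi t, is_derive t (1 : R) (X phi)
                   (T *: (jac f (gam u rho phi t) *m X phi t))) ->
  (forall phi, X phi 0 = 1%:M) ->
  C0torus wt -> (forall i, C0torus (wphi i)) ->
  let Q := Qmat (gam u rho) X wt wphi in
  smooth (fun p : 'rV[R]_(m + 1) => Q (lsubmx p) (rsubmx p 0 0)) ->
  (forall phi t, Q phi t *m Q phi t = Q phi t) ->
  (forall phi t, Q phi (t + 1) = Q (phi + rho) t) ->
  bij_bounded_inv Q (Gamma0 X rho) ->
  C0torus delta ->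
  (forall phi, Gamma0 X rho delta phi = 0) ->
  forall phi, exists (c0 : R) (c : 'I_m -> R),
    delta phi = c0 *: dt_gam (gam u rho) phi
                + \sum_(i < m) c i *: dphi_gam (gam u rho) phi i.
Proof.
Proof.
move=> sf T0 su pu ri dgam dX X0 cwt cwphi Q sQ Qidem Qper [_ Ginj _ _] cdelta G0 phi.
have Xinv : forall psi, X psi 1 \in unitmx.
  move=> psi.
  have cA : forall i j, continuous (fun t => (T *: jac f (gam u rho psi t)) i j).
    move=> i j.
    have -> : (fun t => (T *: jac f (gam u rho psi t)) i j) =
      (fun y : R => T *: y) \o ((fun M : 'cV[R]_n => M i 0) \o
        ((fun x => derive f x (delta_mx j 0 : 'cV[R]_n)) \o gam u rho psi)).
      by apply/funext => t; rewrite /= !mxE.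
    move=> t; apply: continuous_comp; last exact: scaler_continuous.
    apply: continuous_comp; last exact: coord_continuous.
    apply: continuous_comp.
      apply: differentiable_continuous; apply/derivable1_diffP.
      by case: (dgam psi t).
    by have [c _] := sf [:: (delta_mx j 0 : 'cV[R]_n)]; exact: c.
  have hY : forall t : R, is_derive t 1 (X psi) ((T *: jac f (gam u rho psi t)) *m X psi t).
    by move=> t; rewrite -scalemxAl; exact: dX.
  rewrite unitmxE unitfE; apply/negP => /eqP d0.
  have : \det (X psi 1)^T == 0 by rewrite det_tr d0.
  move=> /det0P [v vn0 hv].
  have hw : X psi 1 *m v^T = 0.
    by rewrite -[X psi 1]trmxK -trmx_mul hv trmx0.
  have := @fund_kernel _ _ _ _ hY _ cA (X0 psi) hw.
  by move=> /(congr1 trmx); rewrite trmxK trmx0 => v0; rewrite v0 eqxx in vn0.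
pose Mid psi := 1%:M - dt_gam (gam u rho) psi *m (wt psi)^T
    - \sum_(i < m) dphi_gam (gam u rho) psi i *m (wphi i psi)^T.
have Q0 : forall psi, Q psi 0 = Mid psi.
  by move=> psi; rewrite /Q /Qmat X0 invmx1 mul1mx mulmx1.
have key : forall psi (d : 'cV[R]_n),
    X (psi - rho) 1 *m (Q (psi - rho) 0 *m d) = Q psi 0 *m (X (psi - rho) 1 *m d).
  move=> psi d.
  have -> : Q psi 0 = Q (psi - rho) 1.
    by rewrite -[in RHS](add0r 1) Qper subrK.
  rewrite /Q /Qmat X0 invmx1 mul1mx mulmx1 -!mulmxA; congr (_ *m _).
  by rewrite [invmx _ *m (_ *m d)]mulmxA mulVmx ?Xinv // mul1mx.
pose g := fun psi => Q psi 0 *m delta psi.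
have Qg : Qspace Q g by exists delta.
have Q0f : Qspace Q (fun _ => 0).
  exists (fun _ => 0); split.
    by split; [exact: cst_continuous | by []].
  by apply/funext => psi; rewrite mulmx0.
have Gg : Gamma0 X rho g = Gamma0 X rho (fun _ => 0).
  apply/funext => psi; rewrite /Gamma0 /g key -mulmxBr.
  have := G0 psi; rewrite /Gamma0 => ->.
  by rewrite mulmx0 mulmx0 subrr.
have g0 := Ginj _ _ Qg Q0f Gg.
have gphi : Q phi 0 *m delta phi = 0 by have := congr1 (fun F => F phi) g0.
have colmul : forall (c : 'cV[R]_n) (s : 'M[R]_1), c *m s = s 0 0 *: c.
  by move=> c s; apply/matrixP => i j; rewrite ord1 !mxE big_ord1 mulrC.
exists (((wt phi)^T *m delta phi) 0 0), (fun i => ((wphi i phi)^T *m delta phi) 0 0).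
have ed : delta phi = (1%:M - Q phi 0) *m delta phi.
  by rewrite mulmxBl gphi subr0 mul1mx.
rewrite {1}ed.
rewrite Q0 /Mid !opprD !opprK !addrA addrN add0r mulmxDl mulmx_suml.
rewrite -mulmxA colmul; congr (_ + _); apply: eq_bigr => i _.
by rewrite -mulmxA colmul.
Qed.
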